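(* Let $P(t)(x)=x^n+a_2(t)x^{n-2}-\dots+(-1)^na_n(t)$ be a $C^\infty$ curve of real polynomials (with $a_1=0$), defined for $t$ near $0$, all of whose roots are real for every $t$. Then for every integer $r\ge0$ the following are equivalent: (1) $m(a_k)\ge kr$ for all $2\le k\le n$; (2) $m(\tilde\Delta_k)\ge k(k-1)r$ for all $2\le k\le n$; (3) $m(a_2)\ge 2r$.
   Context: Convention: a monic polynomial is written $P(x)=x^n-a_1x^{n-1}+a_2x^{n-2}-\dots+(-1)^na_n$, so $a_i=\sigma_i(x_1,\dots,x_n)$ is the $i$-th elementary symmetric function of its roots. Multiplicity: for a continuous real or complex valued function $f$ defined near $0$, $m(f)\in\{0,1,2,\dots\}\cup\{\infty\}$ is the supremum of all integers $p\ge0$ such that $f(t)=t^pg(t)$ near $0$ for some continuous function $g$; for a function $F$ on the space of polynomials and a fixed curve $P$, $m(F)$ means $m(t\mapsto F(P(t)))$. Power sums $s_i(x)=\sum_{j=1}^nx_j^i$ ($s_0=n$); $B_k(x)$ is the $k\times k$ matrix with $(i,j)$-entry $s_{i+j-2}(x)$, and $\Delta_k(x)=\det B_k(x)=\sum_{i_1<\dots<i_k}\prod_{1\le l<m\le k}(x_{i_l}-x_{i_m})^2$. Since $\Delta_k$ is symmetric there is a unique polynomial $\tilde\Delta_k$ with $\Delta_k(x)=\tilde\Delta_k(\sigma_1(x),\dots,\sigma_n(x))$; for a polynomial $P$ with coefficients $a_1,\dots,a_n$ one writes $\tilde\Delta_k(P)=\tilde\Delta_k(a_1,\dots,a_n)$.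 *)

(* Defs.v *)
From Stdlib Require Import Reals ClassicalEpsilon.
From Coquelicot Require Import Coquelicot.
From HB Require Import structures.
From mathcomp Require Import all_boot all_order all_algebra.
From mathcomp Require Import Rstruct.
From mathcomp Require Import mpoly.

Unset Printing Implicit Defensive.
Import GRing.Theory.

Local Open Scope ring_scope.

Definition smooth_on (eps : R) (f : R -> R) : Prop :=
  forall (m : nat) (t : R), Rlt (Rabs t) eps -> ex_derive_n f m t.

(* "m(f) >= p" : p is one of the integers p' such that f(t) = t^p' g(t)
   near 0 for some continuous g (m(f) is the supremum of these, which is
   >= p iff p itself is admissible, the set being downward closed). *)
Definition mult_ge (f : R -> R) (p : nat) : Prop :=
  exists delta : R, Rlt 0 delta /\
  exists g : R -> R,
    (forall t, Rlt (Rabs t) delta -> continuous g t) /\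
    (forall t, Rlt (Rabs t) delta -> f t = Rmult (pow t p) (g t)).

Definition curve_poly (n : nat) (a : nat -> R -> R) (t : R) : {poly R} :=
  'X^n + \sum_(k < n) (((-1) ^+ k.+1) * a k.+1 t) *: 'X^(n - k.+1).

Definition hyperbolic (P : {poly R}) : Prop :=
  exists s : seq R, P = \prod_(x <- s) ('X - x%:P).

Definition coefs (n : nat) (a : nat -> R -> R) (t : R) : 'I_n -> R :=
  fun i => a (val i).+1 t.

(* Delta_k = det B_k, B_k(i,j) = s_{i+j} (0-based), s_i = sum_j x_j^i *)
Definition Delta (n k : nat) : mpoly.mpoly n R :=
  \det (\matrix_(i < k, j < k)
          \sum_(l < n) (mpoly.mpolyX R (mpoly.mX l)) ^+ (i + j)).

Definition sigmas (n : nat) : n.-tuple (mpoly.mpoly n R) :=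
  [tuple mpoly.mesym n R i.+1 | i < n].

(* tilde Delta_k : the (unique) polynomial with
   tilde Delta_k (sigma_1, ..., sigma_n) = Delta_k *)
Definition Dtilde (n k : nat) : mpoly.mpoly n R :=
  epsilon (inhabits 0)
    (fun q : mpoly.mpoly n R => mpoly.comp_mpoly (sigmas n) q = Delta n k).

Definition Dtilde_curve (n k : nat) (a : nat -> R -> R) (t : R) : R :=
  (Dtilde n k).@[coefs n a t].

(* Main.v *)
From Stdlib Require Import Reals Lra Lia ClassicalEpsilon FunctionalExtensionality.
From Coquelicot Require Import Coquelicot.

Module AnalysisPart.
Local Open Scope R_scope.

Lemma ball_R (x e y : R) : ball x e y <-> Rabs (y - x) < e.
Proof. unfold ball; simpl; unfold AbsRing_ball, abs, minus, plus, opp; simpl. tauto. Qed.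

Lemma locally_abs (s eps : R) : Rabs s < eps -> locally s (fun y => Rabs y < eps).
Proof.
intros H. assert (Hp : 0 < eps - Rabs s) by lra.
exists (mkposreal _ Hp). intros y Hy. change R in y. pose proof (proj1 (ball_R _ _ _) Hy) as Hy2. simpl in Hy2.
pose proof (Rabs_triang_inv y s). pose proof (Rabs_triang (y - s) s).
replace (y - s + s) with y in H1 by ring. lra.
Qed.

Lemma cont_ed (f : R -> R) x : continuous f x ->
  forall e, 0 < e -> exists d, 0 < d /\ forall y, Rabs (y - x) < d -> Rabs (f y - f x) < e.
Proof.
intros Hc e He. apply continuity_pt_filterlim in Hc.
destruct (Hc e He) as [d [Hd H]]. exists d; split; auto.
intros y Hy. destruct (Req_dec y x) as [->|Hne].
- rewrite Rminus_diag, Rabs_R0; lra.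
- apply (H y). split. split. exact I. exact (not_eq_sym Hne). exact Hy.
Qed.

Lemma loc_smooth (f : R -> R) eps :
  (forall m t, Rabs t < eps -> ex_derive_n f m t) ->
  forall s N, Rabs s < eps ->
  locally s (fun y : R => forall k, (k <= N)%nat -> ex_derive_n f k y).
Proof.
intros Hs s N H. eapply filter_imp; [|exact (locally_abs s eps H)].
intros y Hy k _. now apply Hs.
Qed.

Lemma TL (f : R -> R) eps :
  (forall m t, Rabs t < eps -> ex_derive_n f m t) ->
  forall t j, Rabs t < eps -> (forall i, (i < j)%nat -> Derive_n f i 0 = 0) ->
  exists z, Rabs z <= Rabs t /\
    f t = t ^ j / INR (Factorial.fact j) * Derive_n f j z.
Proof.
intros Hs t j Ht Hv. destruct j as [|j].
{ exists t. split. lra. simpl. field. }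
destruct (Rtotal_order t 0) as [Hneg|[H0|Hpos]].
- set (g := fun y => f (- y)).
  assert (Hg : forall s, 0 <= s <= - t -> forall k, (k <= S j)%nat -> ex_derive_n g k s).
  { intros s Hs1 k Hk. apply ex_derive_n_comp_opp.
    apply (loc_smooth f eps Hs). rewrite Rabs_Ropp.
    rewrite Rabs_left in Ht by lra. rewrite Rabs_right by lra. lra. }
  destruct (Taylor_Lagrange g j 0 (- t) ltac:(lra) Hg) as [z [[Hz1 Hz2] Heq]].
  exists (- z). split.
  { rewrite Rabs_Ropp, Rabs_right, Rabs_left by lra. lra. }
  assert (E : f t = g (- t)) by (unfold g; now rewrite Ropp_involutive).
  rewrite E, Heq, sum_eq_R0.
  + unfold g; rewrite Derive_n_comp_opp.
    * replace (- t - 0) with ((-1) * t) by ring.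
      rewrite Rpow_mult_distr.
      replace ((-1) ^ S j) with ((-1) ^ S j) by reflexivity.
      assert (Hm : (-1) ^ S j * (-1) ^ S j = 1).
      { rewrite <- Rpow_mult_distr. replace (-1 * -1) with 1 by ring. apply pow1. }
      transitivity (t ^ S j / INR (Factorial.fact (S j)) * Derive_n f (S j) (- z) * ((-1) ^ S j * (-1) ^ S j)).
      { unfold Rdiv. ring. }
      rewrite Hm. unfold Rdiv. ring.
    * apply (loc_smooth f eps Hs). rewrite Rabs_Ropp.
      rewrite Rabs_left in Ht by lra. rewrite Rabs_right by lra. lra.
  + intros m Hm. unfold g; rewrite Derive_n_comp_opp.
    * rewrite Ropp_0, Hv by lia. unfold Rdiv. ring.
    * apply (loc_smooth f eps Hs). rewrite Ropp_0, Rabs_R0. pose proof (Rabs_pos t). lra.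
- subst t. exists 0. split. lra.
  simpl. assert (E : f 0 = Derive_n f 0 0) by reflexivity.
  rewrite E, Hv by lia. unfold Rdiv. ring.
- assert (Hg : forall s, 0 <= s <= t -> forall k, (k <= S j)%nat -> ex_derive_n f k s).
  { intros s Hs1 k Hk. apply Hs.
    rewrite Rabs_right in Ht by lra. rewrite Rabs_right by lra. lra. }
  destruct (Taylor_Lagrange f j 0 t Hpos Hg) as [z [[Hz1 Hz2] Heq]].
  exists z. split.
  { rewrite !Rabs_right by lra. lra. }
  rewrite Heq, sum_eq_R0.
  + rewrite Rminus_0_r. unfold Rdiv. ring.
  + intros m Hm. rewrite Hv by lia. unfold Rdiv. ring.
Qed.

Lemma ed_cont (f : R -> R) x :
  (forall e, 0 < e -> exists d, 0 < d /\ forall y, Rabs (y - x) < d -> Rabs (f y - f x) < e)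
  -> continuous f x.
Proof.
intros H. apply continuity_pt_filterlim. intros e He.
destruct (H e He) as [d [Hd Hy]]. exists d. split. lra.
intros y [_ Hyd]. apply Hy. exact Hyd.
Qed.

Lemma cont_pow m x : continuous (fun y : R => y ^ m) x.
Proof.
induction m as [|m IH]; simpl.
- apply continuous_const.
- apply (continuous_mult (fun y : R => y) (fun y => y ^ m)); auto. apply continuous_id.
Qed.

Lemma small6 a b c d e : 0 < a -> 0 < b -> 0 < c -> 0 < d -> 0 < e ->
  exists t, 0 < t /\ t < a /\ t < b /\ t < c /\ t < d /\ t < e.
Proof.
intros. set (m := Rmin (Rmin a b) (Rmin c (Rmin d e))).
assert (H5 : 0 < m).
{ unfold m. repeat apply Rmin_pos; auto. }
assert (m <= a /\ m <= b /\ m <= c /\ m <= d /\ m <= e).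
{ unfold m. pose proof (Rmin_l (Rmin a b) (Rmin c (Rmin d e))).
  pose proof (Rmin_r (Rmin a b) (Rmin c (Rmin d e))).
  pose proof (Rmin_l a b). pose proof (Rmin_r a b).
  pose proof (Rmin_l c (Rmin d e)). pose proof (Rmin_r c (Rmin d e)).
  pose proof (Rmin_l d e). pose proof (Rmin_r d e). lra. }
exists (m / 2). lra.
Qed.

Lemma pow_le1 t k : 0 <= t <= 1 -> t ^ k <= 1.
Proof.
intros H. induction k; simpl. lra.
assert (0 <= t ^ k) by (apply pow_le; lra). nra.
Qed.

Section TB.
Variables (f : R -> R) (eps : R).
Hypothesis Heps : 0 < eps.
Hypothesis Hs : forall m t, Rabs t < eps -> ex_derive_n f m t.

Lemma Dcont j s : Rabs s < eps -> continuous (Derive_n f j) s.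
Proof. intros H. exact (ex_derive_continuous (Derive_n f j) s (Hs (S j) s H)). Qed.

Lemma Vanish m delta C : 0 < delta ->
  (forall t, Rabs t < delta -> Rabs (f t) <= C * Rabs t ^ m) ->
  forall j, (j < m)%nat -> Derive_n f j 0 = 0.
Proof.
intros Hd HB j. induction j as [j IH] using (well_founded_induction Wf_nat.lt_wf).
intros Hjm. destruct (Req_dec (Derive_n f j 0) 0) as [H0|HL]; auto.
exfalso. set (L := Derive_n f j 0) in *.
assert (HLp : 0 < Rabs L) by (apply Rabs_pos_lt; auto).
assert (H0 : Rabs 0 < eps) by (rewrite Rabs_R0; lra).
destruct (cont_ed _ _ (Dcont j 0 H0) (Rabs L / 2) ltac:(lra)) as [d1 [Hd1 Hc]].
set (F := INR (Factorial.fact j)).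
assert (HF : 0 < F) by apply INR_fact_lt_0.
set (C' := Rabs C + 1).
assert (HC' : 0 < C') by (unfold C'; pose proof (Rabs_pos C); lra).
assert (HK : 0 < Rabs L / (2 * F * C')).
{ apply Rdiv_lt_0_compat; auto. nra. }
destruct (small6 d1 delta eps 1 _ Hd1 Hd Heps Rlt_0_1 HK) as [t [Ht0 [Ht1 [Ht2 [Ht3 [Ht4 Ht5]]]]]].
assert (Htabs : Rabs t = t) by (apply Rabs_right; lra).
destruct (TL f eps Hs t j ltac:(rewrite Htabs; lra)) as [z [Hz Heq]].
{ intros i Hi. apply IH; lia. }
assert (HDz : Rabs L / 2 < Rabs (Derive_n f j z)).
{ assert (Rabs (z - 0) < d1) by (rewrite Rminus_0_r; lra).
  specialize (Hc z H). fold L in Hc.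
  pose proof (Rabs_triang_inv L (Derive_n f j z)).
  rewrite <- Rabs_Ropp in Hc. replace (- (Derive_n f j z - L)) with (L - Derive_n f j z) in Hc by ring.
  lra. }
set (P := t ^ j). assert (HP : 0 < P) by (apply pow_lt; lra).
set (Q := P / F). assert (HQ : 0 < Q) by (apply Rdiv_lt_0_compat; auto).
assert (E1 : Rabs (f t) = Q * Rabs (Derive_n f j z)).
{ rewrite Heq. rewrite Rabs_mult. unfold Q, P. rewrite Rabs_right; auto.
  apply Rle_ge. apply Rlt_le. apply Rdiv_lt_0_compat; auto. }
assert (E2 : Rabs (f t) <= C' * t * P).
{ specialize (HB t ltac:(lra)). rewrite Htabs in HB.
  assert (C * t ^ m <= C' * t ^ m).
  { apply Rmult_le_compat_r. apply pow_le; lra. unfold C'. pose proof (Rle_abs C). lra. }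
  destruct (Nat.le_exists_sub (S j) m ltac:(lia)) as [k [Hk _]].
  assert (Hm : t ^ m = t ^ k * t * P).
  { rewrite Hk. unfold P. rewrite pow_add. simpl. ring. }
  assert (t ^ k <= 1) by (apply pow_le1; lra).
  assert (t ^ m <= t * P).
  { rewrite Hm. assert (0 < t * P) by nra. nra. }
  assert (C' * t ^ m <= C' * (t * P)) by (apply Rmult_le_compat_l; lra).
  lra. }
assert (E3 : C' * t < Rabs L / (2 * F)).
{ replace (Rabs L / (2 * F)) with (C' * (Rabs L / (2 * F * C'))) by (field; lra).
  apply Rmult_lt_compat_l; auto. }
assert (E4 : Q * (Rabs L / 2) < Q * Rabs (Derive_n f j z)) by (apply Rmult_lt_compat_l; auto).
assert (E5 : C' * t * P < Rabs L / (2 * F) * P) by (apply Rmult_lt_compat_r; auto).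
assert (E6 : Rabs L / (2 * F) * P = Q * (Rabs L / 2)) by (unfold Q; field; lra).
lra.
Qed.

Lemma TB m delta C : 0 < delta ->
  (forall t, Rabs t < delta -> Rabs (f t) <= C * Rabs t ^ m) ->
  exists g : R -> R,
    (forall t, Rabs t < eps -> continuous g t) /\
    (forall t, Rabs t < eps -> f t = t ^ m * g t).
Proof.
intros Hd HB. pose proof (Vanish m delta C Hd HB) as HV.
set (F := INR (Factorial.fact m)).
assert (HF : 0 < F) by apply INR_fact_lt_0.
set (g := fun t => if Req_EM_T t 0 then Derive_n f m 0 / F else f t / t ^ m).
exists g. split.
- intros t Ht. destruct (Req_EM_T t 0) as [->|Hne].
  + apply ed_cont. intros e He.
    assert (H0 : Rabs 0 < eps) by (rewrite Rabs_R0; lra).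
    destruct (cont_ed _ _ (Dcont m 0 H0) (e * F) ltac:(nra)) as [d [Hd0 Hc]].
    destruct (small6 d eps 1 1 1 Hd0 Heps Rlt_0_1 Rlt_0_1 Rlt_0_1) as [d' [Hd' [Hd'1 [Hd'2 _]]]].
    exists d'. split; auto. intros y Hy. rewrite Rminus_0_r in Hy.
    unfold g. destruct (Req_EM_T 0 0) as [_|Hn]; [|congruence].
    destruct (Req_EM_T y 0) as [->|Hy0].
    { rewrite Rminus_diag, Rabs_R0. lra. }
    destruct (TL f eps Hs y m ltac:(lra) HV) as [z [Hz Heq]].
    assert (Hpm : y ^ m <> 0) by (apply pow_nonzero; auto).
    assert (E : f y / y ^ m - Derive_n f m 0 / F = (Derive_n f m z - Derive_n f m 0) / F).
    { rewrite Heq. fold F. field. split; lra. }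
    rewrite E. unfold Rdiv. rewrite Rabs_mult, Rabs_inv, (Rabs_right F) by lra.
    assert (Rabs (z - 0) < d) by (rewrite Rminus_0_r; lra).
    specialize (Hc z H).
    apply (Rmult_lt_reg_r F); auto. rewrite Rmult_assoc, Rinv_l by lra. lra.
  + apply (continuous_ext_loc g (fun y => f y * / y ^ m)).
    * assert (Hp : 0 < Rabs t) by (apply Rabs_pos_lt; auto).
      exists (mkposreal _ Hp). intros y Hy. change R in y.
      pose proof (proj1 (ball_R _ _ _) Hy) as Hy2. simpl in Hy2.
      unfold g. destruct (Req_EM_T y 0) as [->|]; [|reflexivity].
      exfalso. rewrite Rminus_0_l, Rabs_Ropp in Hy2. lra.
    * apply (continuous_mult f (fun y => / y ^ m)).
      { exact (ex_derive_continuous _ _ (Hs 1%nat t Ht)). }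
      apply continuous_Rinv_comp. apply cont_pow. apply pow_nonzero; auto.
- intros t Ht. unfold g. destruct (Req_EM_T t 0) as [->|Hne].
  + destruct m as [|m].
    * unfold F. simpl. field.
    * assert (E : f 0 = Derive_n f 0 0) by reflexivity.
      rewrite E, HV by lia. simpl. ring.
  + field. apply pow_nonzero; auto.
Qed.
End TB.

Lemma cext (f g : R -> R) t : (forall y, f y = g y) -> continuous f t -> continuous g t.
Proof. exact (continuous_ext f g t). Qed.
Lemma ccst (c t : R) : continuous (fun _ : R => c) t.
Proof. exact (continuous_const c t). Qed.

Ltac sring := ring.
Ltac slra := lra.
Ltac snra := nra.
Ltac sfield := field.

Lemma cont_bound (g : R -> R) : continuous g 0 ->
  exists d M, 0 < d /\ 0 <= M /\ forall y, Rabs y < d -> Rabs (g y) <= M.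
Proof.
intros Hc. destruct (cont_ed g 0 Hc 1 Rlt_0_1) as [d [Hd H]].
exists d, (Rabs (g 0) + 1). split; auto. split. pose proof (Rabs_pos (g 0)); lra.
intros y Hy. assert (Hy0 : Rabs (y - 0) < d) by (rewrite Rminus_0_r; auto). specialize (H y Hy0).
pose proof (Rabs_triang (g y - g 0) (g 0)). replace (g y - g 0 + g 0) with (g y) in H0 by ring.
lra.
Qed.

Lemma sq_abs x K u : 0 <= K -> x * x <= K * (u * u) -> Rabs x <= sqrt K * Rabs u.
Proof.
intros HK H. rewrite <- sqrt_Rsqr_abs. rewrite <- (sqrt_Rsqr (Rabs u)) by apply Rabs_pos.
rewrite <- sqrt_mult_alt by auto. apply sqrt_le_1_alt.
unfold Rsqr. rewrite <- Rabs_mult, Rabs_right by (apply Rle_ge; nra). lra.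
Qed.

Lemma minpos (N : nat) (D : nat -> R) : (forall j, 0 < D j) ->
  exists d, 0 < d /\ forall j, (j <= N)%nat -> d <= D j.
Proof.
intros HD. induction N as [|N [d [Hd H]]].
- exists (D 0%nat). split; auto. intros j Hj. replace j with 0%nat by lia. lra.
- exists (Rmin d (D (S N))). split. apply Rmin_pos; auto.
  intros j Hj. destruct (Nat.eq_dec j (S N)) as [->|Hne].
  + apply Rmin_r.
  + apply Rle_trans with d. apply Rmin_l. apply H. lia.
Qed.

End AnalysisPart.
Import AnalysisPart.

Require Import Defs.
From HB Require Import structures.
From mathcomp Require Import all_boot all_order all_fingroup all_algebra.
From mathcomp Require Import Rstruct mpoly.
From mathcomp Require Import ring lra zify.
Ltac mlra := lra.
Ltac mnra := nra.

Module AlgPart.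
Set Implicit Arguments. Unset Strict Implicit. Unset Printing Implicit Defensive.
Import Order.TTheory GRing.Theory Num.Theory.
Local Open Scope ring_scope.

Lemma msymXU (T : nzRingType) n (s : 'S_n) (i : 'I_n) : msym s ('X_i : {mpoly T[n]}) = 'X_(s i).
Proof. by rewrite /msym mmapX mmap1U. Qed.

Lemma mXU n (l : 'I_n) : mX l = U_(l)%MM.
Proof. by apply/mnmP => i; rewrite /mX !mnmE eq_sym. Qed.

Lemma DeltaE n k : Delta n k =
  \det (\matrix_(i < k, j < k) \sum_(l < n) ('X_l : {mpoly R[n]}) ^+ (i + j)).
Proof. rewrite /Delta; congr (\det _); apply/matrixP => i j; rewrite !mxE.
by apply: eq_bigr => l _; rewrite mXU. Qed.

Lemma Delta_sym n k : Delta n k \is symmetric.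
Proof.
apply/issymP => s. rewrite DeltaE -det_map_mx. congr (\det _).
apply/matrixP => i j. rewrite !mxE rmorph_sum /=.
transitivity (\sum_(l < n) ('X_(s l) : {mpoly R[n]}) ^+ (i + j)).
  by apply: eq_bigr => l _; rewrite rmorphXn /= msymXU.
by rewrite [RHS](reindex_inj (@perm_inj _ s)).
Qed.

Lemma Dtilde_spec n k : mpoly.comp_mpoly (sigmas n) (Dtilde n k) = Delta n k.
Proof.
have [t [Ht _]] := sym_fundamental (Delta_sym n k).
exact: (epsilon_spec (inhabits 0) (fun q : {mpoly R[n]} => mpoly.comp_mpoly (sigmas n) q = Delta n k) (ex_intro _ t Ht)).
Qed.

Definition ev n (x : 'I_n -> R) (k : nat) : R := (mesym n R k).@[x].

Lemma Dtilde_eval n k (x : 'I_n -> R) :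
  (Dtilde n k).@[fun i : 'I_n => ev x (val i).+1] = (Delta n k).@[x].
Proof.
rewrite -Dtilde_spec comp_mpoly_meval. congr (_.@[_]).
by apply: functional_extensionality => i; rewrite /sigmas tnth_mktuple.
Qed.

Lemma ev_scale n (x : 'I_n -> R) c k :
  ev (fun i => c * x i) k = c ^+ k * ev x k.
Proof.
rewrite /ev /mesym !raddf_sum /= mulr_sumr; apply: eq_bigr => h /eqP hk.
rewrite !rmorph_prod /=.
under eq_bigr do rewrite mevalXU.
rewrite big_split /= prodr_const hk; congr (_ * _).
by apply: eq_bigr => i _; rewrite mevalXU.
Qed.

Lemma Delta_eval n k (x : 'I_n -> R) : (Delta n k).@[x] =
  \det (\matrix_(i < k, j < k) \sum_(l < n) x l ^+ (i + j)).
Proof.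
rewrite DeltaE -det_map_mx; congr (\det _); apply/matrixP => i j.
rewrite !mxE rmorph_sum /=; apply: eq_bigr => l _.
by rewrite rmorphXn /= mevalXU.
Qed.

Lemma sum_ord_2 k : (2 * \sum_(i < k) i = k * (k - 1))%N.
Proof.
elim: k => [|k IH]; first by rewrite big_ord0.
rewrite big_ord_recr /= mulnDr IH.
nia.
Qed.

Lemma Delta_scale n k (x : 'I_n -> R) c :
  (Delta n k).@[fun i => c * x i] = c ^+ (k * (k - 1)) * (Delta n k).@[x].
Proof.
rewrite !Delta_eval.
set M := \matrix_(i < k, j < k) \sum_(l < n) x l ^+ (i + j).
set d := \row_(i < k) c ^+ i.
have -> : \matrix_(i < k, j < k) \sum_(l < n) (c * x l) ^+ (i + j)
          = diag_mx d *m M *m diag_mx d.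
  apply/matrixP => i j; rewrite mul_mx_diag mul_diag_mx !mxE.
  rewrite mulr_sumr mulr_suml; apply: eq_bigr => l _.
  by rewrite exprMn exprD; ring.
rewrite !det_mulmx det_diag.
have -> : \prod_i d 0 i = c ^+ (\sum_(i < k) i).
  by rewrite -prodrXr; apply: eq_bigr => i _; rewrite mxE.
by rewrite -sum_ord_2 mul2n -addnn exprD; ring.
Qed.

Lemma curve_coef n a t i : (curve_poly n a t)`_i =
  (i == n)%:R + \sum_(j < n) (-1) ^+ j.+1 * a j.+1 t * (i == (n - j.+1)%N)%:R.
Proof.
rewrite /curve_poly coefD coefXn coef_sum; congr (_ + _).
by apply: eq_bigr => j _; rewrite coefZ coefXn.
Qed.

Lemma curve_coef_k n a t k : (1 <= k <= n)%N ->
  (curve_poly n a t)`_(n - k)%N = (-1) ^+ k * a k t.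
Proof.
move=> /andP [k1 kn]. rewrite curve_coef.
have -> : ((n - k)%N == n) = false by apply/negbTE; lia.
rewrite add0r.
have kn' : (k.-1 < n)%N by lia.
rewrite (bigD1 (Ordinal kn')) //= big1 ?addr0.
  have -> : k.-1.+1 = k by lia.
  by rewrite eqxx mulr1.
move=> j /eqP hj. have : ((n - k)%N == (n - j.+1)%N) = false.
  apply/negbTE; apply/eqP => E; apply: hj; apply/val_inj => /=.
  have := ltn_ord j; lia.
by move=> ->; rewrite mulr0.
Qed.

Lemma curve_coef_ge n a t i : (n <= i)%N ->
  (curve_poly n a t)`_i = (i == n)%:R.
Proof.
move=> ni. rewrite curve_coef big1 ?addr0 // => j _.
have : (i == (n - j.+1)%N) = false by apply/negbTE; have := ltn_ord j; lia.
by move=> ->; rewrite mulr0.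
Qed.

Lemma cfX (c : R) (Q : {poly R}) i : (('X - c%:P) * Q)`_i.+1 = Q`_i - c * Q`_i.+1.
Proof. by rewrite mulrBl coefB coefXM coefCM. Qed.

Lemma prod_coefs (s : seq R) :
  let P := \prod_(c <- s) ('X - c%:P) in
  P`_(size s) = 1 /\ (P * 'X)`_(size s) = - \sum_(c <- s) c /\
  2 * (P * 'X * 'X)`_(size s) = (\sum_(c <- s) c) ^+ 2 - \sum_(c <- s) c ^+ 2.
Proof.
elim: s => [|c s IH] /=.
  rewrite !big_nil coef1 eqxx !coefMX /=. split => //. split; first by rewrite oppr0.
  by rewrite mulr0 expr0n /= subr0.
move: IH; set P := \prod_(c <- s) ('X - c%:P) => [[H1 [H2 H3]]].
have Hsz : size P = (size s).+1 by rewrite size_prod_XsubC.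
have HP1 : P`_(size s).+1 = 0 by rewrite nth_default // Hsz.
have HPX : (P * 'X)`_(size s).+1 = 1 by rewrite coefMX /= H1.
have HPXX : (P * 'X * 'X)`_(size s).+1 = (P * 'X)`_(size s) by rewrite coefMX.
rewrite !big_cons -!mulrA !cfX !mulrA HPXX HPX H1 HP1 H2.
split; first by rewrite mulr0 subr0.
split; first by ring.
rewrite -/P mulrBr H3. ring.
Qed.

Lemma roots n a t : (2 <= n)%N -> hyperbolic (curve_poly n a t) ->
  exists x : 'I_n -> R, (forall k, (1 <= k <= n)%N -> a k t = ev x k) /\
   \sum_i x i ^+ 2 = a 1%N t ^+ 2 - 2 * a 2%N t.
Proof.
move=> n2 [s Hs].
have [H1 [H2 H3]] := prod_coefs s.
have Hszp : size (\prod_(c <- s) ('X - c%:P)) = (size s).+1 := size_prod_XsubC s id.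
have Hsz : size s == n.
  case: (ltngtP (size s) n) => // hlt; exfalso.
  - have : (curve_poly n a t)`_n = 0 by rewrite Hs nth_default // Hszp.
    by rewrite curve_coef_ge // eqxx => /eqP; rewrite oner_eq0.
  - have : (curve_poly n a t)`_(size s) = 0.
      by rewrite curve_coef_ge ?(ltnW hlt) // eq_sym (ltn_eqF hlt).
    by rewrite Hs H1 => /eqP; rewrite oner_eq0.
have SQ : \sum_(c <- s) c ^+ 2 = a 1%N t ^+ 2 - 2 * a 2%N t.
  move: (eqP Hsz) H2 H3 => Es; rewrite Es -Hs => H2 H3.
  case: n n2 Es H2 H3 Hs Hsz => [|[|n]] // _ Es H2 H3 Hs Hsz.
  rewrite coefMX /= in H2. rewrite !coefMX /= in H3.
  have e1 := curve_coef_k a t (k := 1) (n := n.+2) isT.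
  have e2 := curve_coef_k a t (k := 2) (n := n.+2) isT.
  rewrite subn1 /= in e1. rewrite subn2 /= in e2.
  rewrite e1 in H2. rewrite e2 in H3.
  have Hsum : \sum_(c <- s) c = a 1%N t by rewrite -[LHS]opprK -H2 expr1 mulN1r opprK.
  rewrite Hsum in H3.
  have E : \sum_(c <- s) c ^+ 2 = a 1%N t ^+ 2 - 2 * ((-1) ^+ 2 * a 2%N t) by rewrite H3; ring.
  rewrite E; ring.
pose cs := @Tuple n R s Hsz.
exists (tnth cs). split.
- move=> k /andP [k1 kn].
  have kn' : (k < n.+1)%N by [].
  have := mroots_coeff cs (Ordinal kn'). rewrite /= -Hs curve_coef_k ?k1 //.
  move/(mulfI _). apply. by rewrite expf_neq0 // oppr_eq0 oner_eq0.
- rewrite -(big_tuple _ _ cs (fun _ => true) (fun c => c ^+ 2)) /=.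
  exact: SQ.
Qed.

Lemma Delta2_eval n (x : 'I_n -> R) : (Delta n 2).@[x] =
  n%:R * \sum_(l < n) x l ^+ 2 - (\sum_(l < n) x l) ^+ 2.
Proof.
rewrite Delta_eval (expand_det_row _ 0) !big_ord_recl big_ord0 /cofactor !det_mx11 !mxE /= /bump /=.
under eq_bigr do rewrite expr0.
under [X in _ + (X * _ + _)]eq_bigr do rewrite expr1.
rewrite sumr_const card_ord expr0 expr1 mulN1r mul1r.
rewrite -mulr_natl. ring.
Qed.

Lemma ev_bound n (x : 'I_n -> R) k B : 0 <= B -> (forall i, `|x i| <= B) ->
  `|ev x k| <= (\sum_(h : {set 'I_n} | #|h| == k) (1 : R)) * B ^+ k.
Proof.
move=> B0 HB. rewrite /ev /mesym raddf_sum /= mulr_suml.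
apply: le_trans (ler_norm_sum _ _ _) _.
apply: ler_sum => h /eqP hk. rewrite mul1r rmorph_prod /= normr_prod.
rewrite -hk -prodr_const. apply: ler_prod => i _.
by rewrite mevalXU normr_ge0 HB.
Qed.

Lemma cont_addR (f g : R -> R) t : continuous f t -> continuous g t ->
  continuous (fun y => f y + g y) t.
Proof. move=> Hf Hg. exact: (continuous_plus f g t Hf Hg). Qed.

Lemma cont_mulR (f g : R -> R) t : continuous f t -> continuous g t ->
  continuous (fun y => f y * g y) t.
Proof. move=> Hf Hg. exact: (continuous_mult f g t Hf Hg). Qed.

Lemma cont_sum (I : Type) (r : seq I) (F : I -> R -> R) t :
  (forall i, continuous (F i) t) -> continuous (fun y => \sum_(i <- r) F i y) t.
Proof.
move=> HF. elim: r => [|i r IH].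
  apply: (cext (fun _ => 0)); first by move=> y; rewrite big_nil.
  exact: ccst.
apply: (cext (fun y => F i y + \sum_(j <- r) F j y)).
  by move=> y; rewrite big_cons.
exact: cont_addR.
Qed.

Lemma cont_prod (I : Type) (r : seq I) (F : I -> R -> R) t :
  (forall i, continuous (F i) t) -> continuous (fun y => \prod_(i <- r) F i y) t.
Proof.
move=> HF. elim: r => [|i r IH].
  apply: (cext (fun _ => 1)); first by move=> y; rewrite big_nil.
  exact: ccst.
apply: (cext (fun y => F i y * \prod_(j <- r) F j y)).
  by move=> y; rewrite big_cons.
exact: cont_mulR.
Qed.

Lemma cont_expR (f : R -> R) k t : continuous f t -> continuous (fun y => f y ^+ k) t.
Proof.
move=> Hf. apply: (cext (fun y => pow (f y) k)); first by move=> y; rewrite RpowE.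
exact: (continuous_comp f (fun z => pow z k) t Hf (cont_pow k (f t))).
Qed.

Lemma cont_meval n (p : {mpoly R[n]}) (v : 'I_n -> R -> R) t :
  (forall i, continuous (v i) t) -> continuous (fun y => p.@[fun i => v i y]) t.
Proof.
move=> Hv.
apply: (cext (fun y => \sum_(m <- msupp p) p@_m * \prod_i v i y ^+ m i)).
  by move=> y; rewrite mevalE.
apply: cont_sum => m. apply: cont_mulR; first exact: ccst.
apply: cont_prod => i. exact: cont_expR.
Qed.

Lemma normRabs (x : R) : `|x| = Rabs x. Proof. by []. Qed.

Section Main.
Variables (n : nat) (a : nat -> R -> R) (eps : R).
Hypothesis Hn : (2 <= n)%N.
Hypothesis Heps : Rlt 0 eps.
Hypothesis Hsm : forall k : nat, (1 <= k <= n)%N -> smooth_on eps (a k).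
Hypothesis Ha1 : forall t : R, Rlt (Rabs t) eps -> a 1%N t = R0.
Hypothesis Hhyp : forall t : R, Rlt (Rabs t) eps -> hyperbolic (curve_poly n a t).

Lemma Dcurve_roots t : Rlt (Rabs t) eps -> exists x : 'I_n -> R,
  (forall k, (1 <= k <= n)%N -> a k t = ev x k) /\
  \sum_i x i ^+ 2 = - (2 * a 2%N t) /\
  (forall k, Dtilde_curve n k a t = (Delta n k).@[x]).
Proof.
move=> Ht. have [x [Hx Hs]] := @roots n a t Hn (Hhyp Ht).
exists x; split => //; split.
  by rewrite Hs Ha1 // expr0n /= sub0r.
move=> k. rewrite /Dtilde_curve -Dtilde_eval. congr (_.@[_]).
apply: functional_extensionality => i. rewrite /coefs Hx //.
by apply/andP; split => //; exact: ltn_ord.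
Qed.

Lemma scale_id t c k : Rlt (Rabs t) eps ->
  (Dtilde n k).@[fun i : 'I_n => c ^+ (val i).+1 * a (val i).+1 t]
  = c ^+ (k * (k - 1)) * Dtilde_curve n k a t.
Proof.
move=> Ht. have [x [Hx [_ HD]]] := Dcurve_roots Ht.
rewrite HD -Delta_scale -Dtilde_eval. congr (_.@[_]).
apply: functional_extensionality => i. rewrite ev_scale Hx //.
by apply/andP; split => //; exact: ltn_ord.
Qed.

Lemma ev1 m (x : 'I_m -> R) : ev x 1 = \sum_i x i.
Proof. rewrite /ev mesym1E raddf_sum; apply: eq_bigr => i _ /=. exact: mevalXU. Qed.

Lemma Rmin_lt_l x y z : Rlt (Rabs z) (Rmin x y) -> Rlt (Rabs z) x.
Proof. move=> H. apply: Rlt_le_trans H (Rmin_l _ _). Qed.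
Lemma Rmin_lt_r x y z : Rlt (Rabs z) (Rmin x y) -> Rlt (Rabs z) y.
Proof. move=> H. apply: Rlt_le_trans H (Rmin_r _ _). Qed.

Lemma d23 r : (forall k, (2 <= k <= n)%N -> mult_ge (Dtilde_curve n k a) (k * (k - 1) * r))
  -> mult_ge (a 2%N) (2 * r).
Proof.
move=> /(_ 2%N) H. have [d [Hd [g [Hc Heq]]]] := H Hn.
exists (Rmin d eps). split; first exact: Rmin_pos.
pose c : R := - (2 * n%:R)^-1.
exists (fun t => g t * c). split.
  move=> t Ht. apply: cont_mulR; [exact: Hc (Rmin_lt_l Ht) | exact: ccst].
move=> t Ht. have Htd := Rmin_lt_l Ht. have Hte := Rmin_lt_r Ht.
have [x [Hx [Hs HD]]] := Dcurve_roots Hte.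
move: (Heq t Htd). have e1 : ev x 1 = 0 by rewrite -Hx ?(Ha1 Hte) //; lia.
rewrite HD Delta2_eval Hs -ev1 e1.
have -> : (2 * (2 - 1) * r = 2 * r)%N by lia.
rewrite RmultE RpowE => E.
have n0 : (n%:R : R) != 0 by rewrite pnatr_eq0 -lt0n; lia.
rewrite ?RmultE ?RpowE /c mulrA -E RoppE. field. exact: n0.
Qed.

Lemma d31 r : mult_ge (a 2%N) (2 * r) ->
  forall k, (2 <= k <= n)%N -> mult_ge (a k) (k * r).
Proof.
move=> [d [Hd [g [Hc Heq]]]] k /andP [k2 kn].
have H0 : Rlt (Rabs 0) d by rewrite Rabs_R0.
have [d' [M [Hd' [HM HgM]]]] := cont_bound g (Hc 0 H0).
pose d1 := Rmin d (Rmin d' eps).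
have Hd1 : Rlt 0 d1 by apply: Rmin_pos => //; apply: Rmin_pos.
pose N := \sum_(h : {set 'I_n} | #|h| == k) (1 : R).
pose B0 := sqrt (2%:R * M).
have HB : forall t, Rlt (Rabs t) d1 ->
    Rle (Rabs (a k t)) (Rmult (Rmult N (pow B0 k)) (pow (Rabs t) (k * r))).
  move=> t Ht.
  have Htd : Rlt (Rabs t) d := Rmin_lt_l Ht.
  have Htd' : Rlt (Rabs t) d' := Rmin_lt_l (Rmin_lt_r Ht).
  have Hte : Rlt (Rabs t) eps := Rmin_lt_r (Rmin_lt_r Ht).
  have [x [Hx [Hs _]]] := Dcurve_roots Hte.
  have /RleP Hg := HgM t Htd'. rewrite -normRabs in Hg.
  have Ha2 := Heq t Htd.
  have HM' : 0 <= M by apply/RleP.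
  have Hxi : forall i, Rle (Rabs (x i)) (Rmult B0 (Rabs (pow t r))).
    move=> i. apply: sq_abs; first by apply/RleP; rewrite R0E; apply: mulr_ge0.
    have Hle : x i * x i <= \sum_j x j ^+ 2.
      rewrite (bigD1 i) //= -expr2 lerDl. apply: sumr_ge0 => j _. exact: sqr_ge0.
    move: Hle. rewrite Hs Ha2 !RmultE !RpowE.
    have -> : (2 * r = r + r)%N by lia.
    rewrite exprD => Hle. apply/RleP.
    have Hp : 0 <= t ^+ r * t ^+ r by rewrite -expr2; exact: sqr_ge0.
    have Hg' : - g t <= M by apply: le_trans Hg; rewrite -normrN; exact: ler_norm.
    mnra.
  have HB0 : 0 <= B0 by apply/RleP; exact: sqrt_pos.
  have HBp : 0 <= B0 * `|t ^+ r| by apply: mulr_ge0.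
  have Hxi' : forall i, `|x i| <= B0 * `|t ^+ r|.
    by move=> i; apply/RleP; rewrite normRabs -RpowE; exact: Hxi i.
  have Hb := ev_bound k HBp Hxi'.
  rewrite Hx; last by apply/andP; split => //; lia.
  apply/RleP. rewrite !RmultE !RpowE -normRabs.
  apply: le_trans Hb _.
  rewrite exprMn normrX -exprM mulnC mulrA. exact: lexx.
have Hk : (0 < k <= n)%N by lia.
have [g' [Hg'c Hg'e]] := TB (a k) eps Heps (Hsm Hk) (k * r) d1 _ Hd1 HB.
exists eps. split => //. by exists g'.
Qed.

Lemma d12 r : (forall k, (2 <= k <= n)%N -> mult_ge (a k) (k * r)) ->
  forall k, (2 <= k <= n)%N -> mult_ge (Dtilde_curve n k a) (k * (k - 1) * r).
Proof.
move=> H1 k Hk.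
have Hex : forall j : nat, exists p : R * (R -> R), Rlt 0 p.1 /\
   ((2 <= j <= n)%N -> (forall t, Rlt (Rabs t) p.1 -> continuous p.2 t) /\
     (forall t, Rlt (Rabs t) p.1 -> a j t = Rmult (pow t (j * r)) (p.2 t))).
  move=> j. case: (boolP (2 <= j <= n)%N) => hj.
  - have [d [Hd [g [Hc He]]]] := H1 j hj. by exists (d, g).
  - exists (1, fun _ => 0). split; first exact: Rlt_0_1.
    by [] || case.
pose P j := proj1_sig (constructive_indefinite_description _ (Hex j)).
have HP : forall j, Rlt 0 (P j).1 /\
   ((2 <= j <= n)%N -> (forall t, Rlt (Rabs t) (P j).1 -> continuous (P j).2 t) /\
     (forall t, Rlt (Rabs t) (P j).1 -> a j t = Rmult (pow t (j * r)) ((P j).2 t))).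
  move=> j. exact: (proj2_sig (constructive_indefinite_description _ (Hex j))).
have [dl [Hdl Hdlj]] := minpos n (fun j => (P j).1) (fun j => proj1 (HP j)).
pose d := Rmin dl eps.
pose h := fun (t : R) (i : 'I_n) => if val i == 0%N then 0 else (P (val i).+1).2 t.
have Hd : Rlt 0 d by apply: Rmin_pos.
have Hjd : forall t j, Rlt (Rabs t) d -> (j <= n)%N -> Rlt (Rabs t) (P j).1.
  move=> t j Ht hj. apply: Rlt_le_trans (Rmin_lt_l Ht) _. apply: Hdlj. lia.
have Hcoef : forall t, Rlt (Rabs t) d -> forall i : 'I_n,
    a (val i).+1 t = (t ^+ r) ^+ (val i).+1 * h t i.
  move=> t Ht i. rewrite /h. case: eqP => [E|E].
    by rewrite E (Ha1 (Rmin_lt_r Ht)) mulr0.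
  have hj : (2 <= (val i).+1 <= n)%N.
    apply/andP; split; [by rewrite ltnS lt0n; apply/eqP | exact: ltn_ord].
  have [_ He] := proj2 (HP _) hj.
  rewrite He; last by apply: Hjd => //; exact: ltn_ord.
  by rewrite RmultE RpowE -exprM mulnC.
have Hkey : forall t, Rlt (Rabs t) d ->
    Dtilde_curve n k a t = (t ^+ r) ^+ (k * (k - 1)) * (Dtilde n k).@[h t].
  move=> t Ht. have Hte := Rmin_lt_r Ht.
  have Hc : coefs n a t = fun i : 'I_n => (t ^+ r) ^+ (val i).+1 * h t i.
    by apply: functional_extensionality => i; rewrite /coefs Hcoef.
  have [c0|cn0] := eqVneq (t ^+ r) 0.
  - rewrite /Dtilde_curve Hc c0 expr0n /=.
    have -> : (k * (k - 1) == 0)%N = false by apply/negbTE; lia.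
    rewrite mul0r.
    have -> : (fun i : 'I_n => 0 ^+ (val i).+1 * h t i)
            = (fun i : 'I_n => 0 ^+ (val i).+1 * a (val i).+1 t).
      by apply: functional_extensionality => i; rewrite expr0n /= !mul0r.
    rewrite scale_id // expr0n /=.
    have -> : (k * (k - 1) == 0)%N = false by apply/negbTE; lia.
    by rewrite mul0r.
  - have -> : h t = fun i : 'I_n => (t ^+ r)^-1 ^+ (val i).+1 * a (val i).+1 t.
      apply: functional_extensionality => i. rewrite Hcoef // mulrA -exprMn.
      by rewrite mulVf // expr1n mul1r.
    by rewrite scale_id // mulrA -exprMn mulfV // expr1n mul1r.
exists d. split => //.
exists (fun t => (Dtilde n k).@[h t]). split.
  move=> t Ht. apply: (cont_meval (v := fun i y => h y i)) => i.
  rewrite /h. case: eqP => E; first exact: ccst.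
  have hj : (2 <= (val i).+1 <= n)%N.
    apply/andP; split; [by rewrite ltnS lt0n; apply/eqP | exact: ltn_ord].
  have [Hc _] := proj2 (HP _) hj. apply: Hc.
  apply: Hjd => //; exact: ltn_ord.
move=> t Ht. rewrite Hkey // RmultE RpowE -exprM. congr (_ ^+ _ * _). lia.
Qed.

End Main.

End AlgPart.
Import AlgPart.

Theorem lemma3p7 (n : nat) (a : nat -> R -> R) (eps : R) :
  (2 <= n)%N ->
  Rlt 0 eps ->
  (forall k : nat, (1 <= k <= n)%N -> smooth_on eps (a k)) ->
  (forall t : R, Rlt (Rabs t) eps -> a 1%N t = R0) ->
  (forall t : R, Rlt (Rabs t) eps -> hyperbolic (curve_poly n a t)) ->
  forall r : nat,
    ((forall k : nat, (2 <= k <= n)%N -> mult_ge (a k) (k * r)) <->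
     (forall k : nat, (2 <= k <= n)%N ->
        mult_ge (Dtilde_curve n k a) (k * (k - 1) * r))) /\
    ((forall k : nat, (2 <= k <= n)%N ->
        mult_ge (Dtilde_curve n k a) (k * (k - 1) * r)) <->
     mult_ge (a 2%N) (2 * r)).
Proof.
move=> Hn Heps Hsm Ha1 Hhyp r. split; split.
- exact: (d12 Hn Heps Ha1 Hhyp).
- move=> H2. exact: (d31 Hn Heps Hsm Ha1 Hhyp (d23 Hn Heps Ha1 Hhyp H2)).
- exact: (d23 Hn Heps Ha1 Hhyp).
- move=> H3. exact: (d12 Hn Heps Ha1 Hhyp (d31 Hn Heps Hsm Ha1 Hhyp H3)).
Qed.
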